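(* Let $d\ge1$, $0<s_0<s_1$, $0<\alpha_0<\alpha_1$, $W=[s_0,s_1]\times[\alpha_0,\alpha_1]$, and $g\in L^2_0(\mathbb{T}^d;\mathbb{C})$ with Fourier coefficients $\hat g_k$. For $k\in\mathbb{Z}^d\setminus\{0\}$ let $E_k(s,\alpha)=\frac{\alpha}{\alpha+|k|^{2s}}$ and, for the partial derivatives of $\mathcal{S}(s,\alpha)=(E_k(s,\alpha)\hat g_k)_{k}$, let $\partial^i_\alpha\mathcal{S}(s,\alpha)=(\partial_\alpha^iE_k(s,\alpha)\hat g_k)_{k\neq0}$, $\partial_s^i\mathcal{S}(s,\alpha)=(\partial_s^iE_k(s,\alpha)\hat g_k)_{k\ne0}$, $\partial_{s,\alpha}\mathcal{S}(s,\alpha)=(\partial_s\partial_\alpha E_k(s,\alpha)\hat g_k)_{k\ne0}$. Then there are constants $M_{\alpha_1,i}>0$ ($i=1,2,3$) and $M_{\alpha_1}>0$ depending only on $\alpha_1$ (and $i$) such that for every $\varepsilon>0$, $i\in\{1,2,3\}$ and $(s,\alpha)\in W$: $$\|\partial^i_\alpha\mathcal{S}(s,\alpha)\|_{\ell^2}\le\sum_{k\ne0}\frac{i!}{|k|^{2si}}|\hat g_k|,\qquad \|\partial^i_s\mathcal{S}(s,\alpha)\|_{\ell^2}\le\sum_{k\ne0}\frac{M_{\alpha_1,i}}{\varepsilon^i|k|^{2s-i\varepsilon}}|\hat g_k|,$$ $$\|\partial_{s,\alpha}\mathcal{S}(s,\alpha)\|_{\ell^2}\le\sum_{k\ne0}\frac{M_{\alpha_1}}{\varepsilon|k|^{2s-\varepsilon}}|\hat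 g_k|.$$
   Context: $\mathbb{T}^d=\mathbb{R}^d/(2\pi\mathbb{Z})^d$; $L^2_0$ denotes zero-mean square-integrable functions; $\hat g_k=\int_{\mathbb{T}^d}g(x)e^{-ik\cdot x}dx$. *)

(* Defs.v *)
From HB Require Import structures.
From mathcomp Require Import all_boot all_order all_algebra.
From mathcomp Require Import all_classical all_reals all_analysis.
From mathcomp.real_closed Require Import complex.
Set Implicit Arguments. Unset Strict Implicit. Unset Printing Implicit Defensive.
Import Order.TTheory GRing.Theory Num.Theory.
Local Open Scope classical_set_scope.
Local Open Scope ring_scope.

Definition knorm (R : realType) (d : nat) (k : 'rV[int]_d) : R :=
  Num.sqrt (\sum_(j < d) ((k ord0 j)%:~R : R) ^+ 2).

Definition Ek (R : realType) (d : nat) (k : 'rV[int]_d) (s a : R) : R :=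
  a / (a + powR (knorm R k) (2 * s)).

Definition nonzero_pts (d : nat) : set 'rV[int]_d := [set k | k != 0].

Definition l2norm (R : realType) (d : nat) (x : 'rV[int]_d -> R[i]) : \bar R :=
  let S := (\esum_(k in @nonzero_pts d) ((Normc.normc (x k)) ^+ 2)%:E)%E in
  if S is r%:E then (Num.sqrt r)%:E else +oo%E.

(* g in L^2_0(T^d; C) represented by its Fourier coefficients ghat *)
Definition fourier_L2_0 (R : realType) (d : nat) (ghat : 'rV[int]_d -> R[i]) : Prop :=
  ghat 0 = 0 /\
  (\esum_(k in @nonzero_pts d) ((Normc.normc (ghat k)) ^+ 2)%:E < +oo)%E.

Definition dalpha_Ek (R : realType) (d : nat) (i : nat) (k : 'rV[int]_d) (s a : R) : R :=
  derive1n i (fun a' => @Ek R d k s a') a.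
Definition ds_Ek (R : realType) (d : nat) (i : nat) (k : 'rV[int]_d) (s a : R) : R :=
  derive1n i (fun s' => @Ek R d k s' a) s.
Definition dsalpha_Ek (R : realType) (d : nat) (k : 'rV[int]_d) (s a : R) : R :=
  derive1 (fun s' => derive1 (fun a' => @Ek R d k s' a') a) s.

(* Main.v *)
Require Import Defs.
From HB Require Import structures.
From mathcomp Require Import all_boot all_order all_algebra.
From mathcomp Require Import all_classical all_reals all_analysis.
From mathcomp.real_closed Require Import complex.
From mathcomp Require Import ring lra zify.
Import Order.TTheory GRing.Theory Num.Theory.
Import numFieldNormedType.Exports.
Local Open Scope classical_set_scope.
Local Open Scope ring_scope.

Section S.
Variable R : realType.
Lemma Dpow (c x : R) m : is_derive x 1 (fun y : R => (y + c) ^+ m) (m%:R * (x + c) ^+ m.-1).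
Proof.
have h := is_deriveD (is_derive_id x (1:R)) (is_derive_cst c x 1).
rewrite addr0 in h.
have := is_deriveX m h.
rewrite /GRing.scale /= mulr1.
have -> : ((id + cst c) ^+ m) = (fun y : R => (y + c) ^+ m).
  by apply/funext => y; rewrite exprfctE.
by [].
Qed.
Lemma Dinvpow (C c x : R) m : x + c != 0 ->
  is_derive x 1 (fun y : R => C / (y + c) ^+ m) (- (C * m%:R) / (x + c) ^+ m.+1).
Proof.
move=> hx.
have h1 := @is_deriveV R (fun y => (y + c) ^+ m) x _ 1 (expf_neq0 m hx) (Dpow c x m).
have h2 := is_deriveZ C h1.
have -> : (fun y : R => C / (y + c) ^+ m) = C *: (fun y : R => ((y + c) ^+ m)^-1).
  by apply/funext => y.
apply: is_derive_eq h2 _.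
rewrite /GRing.scale /=.
case: m {h1} => [|m]; first by rewrite !mul0r !mulr0 oppr0 mul0r.
rewrite /= !exprS; field; rewrite ?hx ?expf_neq0 ?andbT //.
Qed.

Lemma chain (F : nat -> R -> R) (P : set R) (N : nat) : open P ->
  (forall n x, (n < N)%N -> P x -> is_derive x 1 (F n) (F n.+1 x)) ->
  forall n x, (n <= N)%N -> P x -> derive1n n (F 0%N) x = F n x.
Proof.
move=> oP hD; elim=> [//|n IH] x hn Px.
rewrite derive1nS derive1E.
have -> : 'D_1 (derive1n n (F 0%N)) x = 'D_1 (F n) x.
  apply: near_eq_derive.
  have : \forall y \near x, P y by apply: open_nbhs_nbhs; split.
  apply: filterS => y Py; apply: IH => //; exact: ltnW.
by have [_ ->] := hD n x hn Px.
Qed.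

Lemma normc_ge0 (z : R[i]) : 0 <= Normc.normc z.
Proof. by case: z => a b; rewrite /= sqrtr_ge0. Qed.

Lemma normc_real (r : R) (z : R[i]) : Normc.normc (r%:C%C * z) = `|r| * Normc.normc z.
Proof. by rewrite Normc.normcM /= expr0n /= addr0 sqrtr_sqr. Qed.

Lemma sum_sq_le (T : Type) (s : seq T) (f : T -> R) : (forall i, 0 <= f i) ->
  \sum_(i <- s) f i ^+ 2 <= (\sum_(i <- s) f i) ^+ 2.
Proof.
move=> f0; elim: s => [|a s IH]; first by rewrite !big_nil expr0n.
rewrite !big_cons sqrrD -addrA lerD2l.
apply: (le_trans IH); rewrite lerDr; apply: mulrn_wge0; apply: mulr_ge0 => //.
by apply: sumr_ge0.
Qed.

Lemma le_fin_ (a b : R) : ((a%:E <= b%:E)%E) = (a <= b). Proof. by rewrite lee_fin. Qed.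

Lemma l2_le (d : nat) (x : 'rV[int]_d -> R[i]) (y : 'rV[int]_d -> R) :
  (forall k, nonzero_pts k -> Normc.normc (x k) <= y k) ->
  (l2norm x <= \esum_(k in @nonzero_pts d) (y k)%:E)%E.
Proof.
move=> hxy.
have S1ge0 : (0 <= \esum_(k in @nonzero_pts d) (y k)%:E)%E.
  by apply: esum_ge0 => k Dk; rewrite le_fin_ (le_trans (normc_ge0 _) (hxy k Dk)).
move: S1ge0; case E1 : (esum _ _) => [r| |] r0.
2: by rewrite leey.
2: by move: r0; rewrite leNgt ltNy0.
rewrite /l2norm.
rewrite le_fin_ in r0.
have H2 : (\esum_(k in @nonzero_pts d) ((Normc.normc (x k)) ^+ 2)%:E <= (r ^+ 2)%:E)%E.
  apply: ge_ereal_sup => /= _ [X [finX XD]] <-.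
  have hs : \sum_(i \in X) Normc.normc (x i) <= r.
    rewrite -le_fin_ -E1 -fsumEFin //.
    apply: esum_ge; exists X => //.
    apply: lee_fsum => //= i /XD Di; rewrite le_fin_; exact: hxy.
  rewrite fsbig_finite // in hs.
  rewrite fsumEFin // le_fin_ fsbig_finite //.
  apply: le_trans; first by apply: sum_sq_le => i; exact: normc_ge0.
  have hs0 : 0 <= \sum_(i <- finmap.enum_fset (fset_set X)) Normc.normc (x i) by apply: sumr_ge0 => i _; exact: normc_ge0.
  by rewrite !expr2; apply: ler_pM.
have S2ge0 : (0 <= \esum_(k in @nonzero_pts d) ((Normc.normc (x k)) ^+ 2)%:E)%E.
  by apply: esum_ge0 => k _; rewrite le_fin_ sqr_ge0.
move: H2 S2ge0.
case: (\esum_(k in @nonzero_pts d) ((Normc.normc (x k)) ^+ 2)%:E)%E => [s| |] //.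
rewrite !le_fin_ => hs s0.
by rewrite -(ger0_norm r0) -sqrtr_sqr ler_sqrt ?sqr_ge0.
Qed.

Lemma knorm_ge1 (d : nat) (k : 'rV[int]_d) : k != 0 -> 1 <= knorm R k.
Proof.
move=> k0.
have : [exists j, k ord0 j != 0].
  apply: contraR k0 => /existsPn h; apply/eqP/matrixP => i j; rewrite ord1 mxE; exact/eqP/negPn/h.
case/existsP => j hj.
have h1 : 1 <= ((k ord0 j)%:~R : R) ^+ 2.
  rewrite -rmorphXn /= ler1z.
  move: hj; move: (k ord0 j) => z hz.
  have : (z <= -1) || (1 <= z). by move: hz; lia.
  case/orP => h; nia.
have h2 : ((k ord0 j)%:~R : R) ^+ 2 <= \sum_(j0 < d) ((k ord0 j0)%:~R : R) ^+ 2.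
  rewrite (bigD1 j) //= lerDl; apply: sumr_ge0 => i _; exact: sqr_ge0.
rewrite /knorm -[X in X <= _]sqrtr1 ler_sqrt; first exact: le_trans h1 h2.
exact: le_trans ler01 (le_trans h1 h2).
Qed.


Definition FA (c : R) (n : nat) : R -> R :=
  if n is m.+1 then (fun a => (-1) ^+ m * m.+1`!%:R * c / (a + c) ^+ m.+2)
  else (fun a => a / (a + c)).

Lemma near_pos (x : R) : 0 < x -> \forall y \near x, 0 < y.
Proof. by move=> x0; apply: open_nbhs_nbhs; split => //; exact: open_gt. Qed.

Lemma FA_der (c : R) (n : nat) (x : R) : 0 < c -> 0 < x -> is_derive x 1 (FA c n) (FA c n.+1 x).
Proof.
move=> c0 x0.
have hx : x + c != 0 by rewrite lt0r_neq0 // ltr_wpDl // ltW.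
case: n => [|m].
  have h := is_deriveB (is_derive_cst (1:R) x 1) (Dinvpow c c x 1 hx).
  have h2 : is_derive x 1 (FA c 0) (0 - - (c * 1%:R) / (x + c) ^+ 2).
    apply: (near_eq_is_derive _ h).
    move: (@near_pos x x0); apply: filterS => y y0.
    have hy : y + c != 0 by rewrite lt0r_neq0 // ltr_wpDl // ltW.
    change (1 - c / (y + c) ^+ 1 = y / (y + c)); rewrite expr1; field; exact: hy.
  apply: is_derive_eq h2 _.
  rewrite /= expr0 mul1r factS muln1 /=; field; exact: hx.
have h := Dinvpow ((-1) ^+ m * m.+1`!%:R * c) c x m.+2 hx.
apply: is_derive_eq h _.
rewrite /= [in RHS]exprS [in RHS]factS natrM.
rewrite -[m.+2%:R]natr1 -[m.+2]addn1 natrD. field. rewrite expf_neq0 //.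
Qed.

Lemma inv_le (p q : R) : 0 < p -> p <= q -> q^-1 <= p^-1.
Proof. by move=> p0 pq; rewrite lef_pV2 ?posrE // (lt_le_trans p0 pq). Qed.

Lemma FA_val (c : R) i a : 0 < c -> 0 < a -> derive1n i (FA c 0) a = FA c i a.
Proof.
move=> c0 a0; apply: (@chain (FA c) [set x | 0 < x] i) => //.

by move=> n x _ x0; exact: FA_der.
Qed.

Lemma FA_bound (c : R) i a : 0 < c -> 0 < a -> (0 < i)%N -> `|FA c i a| <= i`!%:R / c ^+ i.
Proof.
move=> c0 a0; case: i => [//|m] _.
rewrite /= !normrM normrX normrN1 expr1n mul1r normr_nat (gtr0_norm c0).
have hac : 0 < a + c by rewrite addr_gt0.
rewrite normfV normrX (gtr0_norm hac).
have h1 : ((a + c) ^+ m.+2)^-1 <= (c ^+ m.+2)^-1.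
  apply: inv_le; first exact: exprn_gt0.
  by apply: lerXn2r; rewrite ?nnegrE ?ltW //; lra.
rewrite -(mulrA (m.+1)`!%:R); apply: ler_wpM2l => //.
apply: le_trans (ler_wpM2l (ltW c0) h1) _.
rewrite exprS invfM mulrA divff ?mul1r //; exact: lt0r_neq0.
Qed.

Lemma D3 (c1 c2 c3 a x : R) : x + a != 0 ->
  is_derive x 1 (fun y => c1 / (y + a) ^+ 1 + c2 / (y + a) ^+ 2 + c3 / (y + a) ^+ 3)
    (- (c1 * 1%:R) / (x + a) ^+ 2 + - (c2 * 2%:R) / (x + a) ^+ 3 + - (c3 * 3%:R) / (x + a) ^+ 4).
Proof.
move=> hx.
have h := is_deriveD (is_deriveD (Dinvpow c1 a x 1 hx) (Dinvpow c2 a x 2 hx)) (Dinvpow c3 a x 3 hx).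
by [].
Qed.

Lemma psi_der_gen (psi : R -> R) (d c1 c2 c3 a v : R) : 0 < a -> 0 < v ->
  (forall y, 0 < y -> c1 / (y + a) ^+ 1 + c2 / (y + a) ^+ 2 + c3 / (y + a) ^+ 3 = psi y) ->
  - (c1 * 1%:R) / (v + a) ^+ 2 + - (c2 * 2%:R) / (v + a) ^+ 3 + - (c3 * 3%:R) / (v + a) ^+ 4 = d ->
  is_derive v 1 psi d.
Proof.
move=> a0 v0 hpsi hd.
have hv : v + a != 0 by rewrite lt0r_neq0 // addr_gt0.
apply: is_derive_eq (near_eq_is_derive _ (D3 c1 c2 c3 a v hv)) hd.
move: (@near_pos v v0); apply: filterS => y y0; exact: hpsi.
Qed.

Definition psi (a b : R) (n : nat) (v : R) : R :=
  match n with
  | 0 => a / (a + v)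
  | 1 => - (a * b) * v / (a + v) ^+ 2
  | 2 => - (a * b ^+ 2) * v * (a - v) / (a + v) ^+ 3
  | _ => - (a * b ^+ 3) * v * (a ^+ 2 - 4 * a * v + v ^+ 2) / (a + v) ^+ 4
  end.

Definition dpsi (a b : R) (n : nat) (v : R) : R :=
  match n with
  | 0 => - a / (a + v) ^+ 2
  | 1 => - (a * b) * (a - v) / (a + v) ^+ 3
  | _ => - (a * b ^+ 2) * (a ^+ 2 - 4 * a * v + v ^+ 2) / (a + v) ^+ 4
  end.

Lemma psi_der (a b : R) (n : nat) (v : R) : 0 < a -> 0 < v -> (n < 3)%N ->
  is_derive v 1 (psi a b n) (dpsi a b n v).
Proof.
move=> a0 v0.
have hv : v + a != 0 by rewrite lt0r_neq0 // addr_gt0.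
have hv' : a + v != 0 by rewrite lt0r_neq0 // addr_gt0.
case: n => [|[|[|n]]] hn; last by [].
- apply: (psi_der_gen (psi a b 0) (dpsi a b 0 v) a 0 0 a v a0 v0).
    move=> y y0; have hy : y + a != 0 by rewrite lt0r_neq0 // addr_gt0.
    rewrite /= [a + y]addrC; field; exact: hy.
  rewrite /= [a + v]addrC; field; exact: hv.
- apply: (psi_der_gen (psi a b 1) (dpsi a b 1 v) (- (a * b)) (a * b * a) 0 a v a0 v0).
    move=> y y0; have hy : y + a != 0 by rewrite lt0r_neq0 // addr_gt0.
    rewrite /= [a + y]addrC; field; exact: hy.
  rewrite /= [a + v]addrC; field; exact: hv.
- apply: (psi_der_gen (psi a b 2) (dpsi a b 2 v) (a * b ^+ 2) (- 3 * a * a * b ^+ 2) (2 * a * a * a * b ^+ 2) a v a0 v0).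
    move=> y y0; have hy : y + a != 0 by rewrite lt0r_neq0 // addr_gt0.
    rewrite /= [a + y]addrC; field; exact: hy.
  rewrite /= [a + v]addrC; field; exact: hv.
Qed.

Lemma DU (K s : R) : 0 < K ->
  is_derive s 1 (fun t => powR K (2 * t)) (2 * ln K * powR K (2 * s)).
Proof.
move=> K0.
have hg := is_deriveZ (2 * ln K) (is_derive_id s (1:R)).
have h := is_derive1_comp (is_derive_expR ((2 * ln K) *: id s)) hg.
have -> : (fun t => powR K (2 * t)) = expR \o ((2 * ln K) *: id).
  apply/funext => t; rewrite /powR (gt_eqF K0) /=; congr expR.
  change (2 * t * ln K = 2 * ln K * t); ring.
apply: is_derive_eq h _.
rewrite /powR (gt_eqF K0).
change (expR (2 * ln K * s) * (2 * ln K * 1) = 2 * ln K * expR (2 * s * ln K)).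
rewrite mulr1 mulrC; congr (_ * _); congr expR; ring.
Qed.

Definition FS (a K : R) (n : nat) : R -> R := fun s => psi a (2 * ln K) n (powR K (2 * s)).

Lemma psi_step (a b v : R) (n : nat) : 0 < a -> 0 < v -> (n < 3)%N ->
  psi a b n.+1 v = dpsi a b n v * (b * v).
Proof.
move=> a0 v0 hn.
have hv : a + v != 0 by rewrite lt0r_neq0 // addr_gt0.
case: n hn => [|[|[|n]]] hn; last by [].
- rewrite /=; field; exact: hv.
- rewrite /=; field; exact: hv.
- rewrite /=; field; exact: hv.
Qed.

Lemma FS_der (a K : R) (n : nat) (x : R) : 0 < a -> 0 < K -> (n < 3)%N ->
  is_derive x 1 (FS a K n) (FS a K n.+1 x).
Proof.
move=> a0 K0 hn.
have u0 : 0 < powR K (2 * x) by apply: powR_gt0.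
have h := @is_derive1_comp R (psi a (2 * ln K) n) (fun t => powR K (2 * t)) x _ _ (psi_der a (2 * ln K) n (powR K (2 * x)) a0 u0 hn) (DU K x K0).
apply: is_derive_eq h _.
by rewrite /FS (psi_step a (2 * ln K) (powR K (2 * x)) n a0 u0 hn) mulrA.
Qed.

Lemma FS_val (a K : R) (i : nat) (s : R) : 0 < a -> 0 < K -> (i <= 3)%N ->
  derive1n i (FS a K 0) s = FS a K i s.
Proof.
move=> a0 K0 hi; apply: (@chain (FS a K) setT 3) => //.
  exact: openT.
by move=> n x hn _; exact: FS_der.
Qed.

Lemma mixed_val (a K s : R) : 0 < a -> 0 < K ->
  derive1 (fun s' => derive1 (fun a' => a' / (a' + powR K (2 * s'))) a) s =
  (a - powR K (2 * s)) / (a + powR K (2 * s)) ^+ 3 * (2 * ln K * powR K (2 * s)).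
Proof.
move=> a0 K0.
have -> : (fun s' => derive1 (fun a' => a' / (a' + powR K (2 * s'))) a) =
          (fun s' => (fun v => v / (a + v) ^+ 2) (powR K (2 * s'))).
  apply/funext => s'.
  have c0 : 0 < powR K (2 * s') by apply: powR_gt0.
  transitivity (FA (powR K (2 * s')) 1 a); first exact: (FA_val (powR K (2 * s')) 1 a c0 a0).
  by rewrite /= expr0 mul1r mul1r.
have u0 : 0 < powR K (2 * s) by apply: powR_gt0.
have hphi : is_derive (powR K (2 * s)) 1 (fun v => v / (a + v) ^+ 2)
    ((a - powR K (2 * s)) / (a + powR K (2 * s)) ^+ 3).
  apply: (psi_der_gen _ _ 1 (- a) 0 a _ a0 u0).
    move=> y y0; have hy : y + a != 0 by rewrite lt0r_neq0 // addr_gt0.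
    rewrite [a + y]addrC; field; exact: hy.
  have hv : powR K (2 * s) + a != 0 by rewrite lt0r_neq0 // addr_gt0.
  rewrite [a + powR K (2 * s)]addrC; field; exact: hv.
have h := @is_derive1_comp R (fun v => v / (a + v) ^+ 2) (fun t => powR K (2 * t)) s _ _ hphi (DU K s K0).
by rewrite derive1E; case: h => _ ->.
Qed.

Lemma rat_bound (v w Q : R) (k : nat) : 0 < v -> 0 < w ->
  v ^+ 2 * `|Q| <= 2 * w ^+ k -> `|v * Q / w ^+ k| <= 2 / v.
Proof.
move=> v0 w0 h.
have wk : 0 < w ^+ k by apply: exprn_gt0.
rewrite normrM normfV normrM (gtr0_norm v0) (gtr0_norm wk).
rewrite ler_pdivrMr // mulrAC ler_pdivlMr //.
by apply: le_trans h; rewrite le_eqVlt; apply/orP; left; apply/eqP; ring.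
Qed.

Lemma psi_bound (a b v : R) (i : nat) : 0 < a -> 0 < v -> 0 <= b -> (1 <= i <= 3)%N ->
  `|psi a b i v| <= 2 * a * b ^+ i / v.
Proof.
move=> a0 v0 b0 hi.
have w0 : 0 < a + v by rewrite addr_gt0.
have hvw : v ^+ 2 <= (a + v) ^+ 2 by apply: lerXn2r; rewrite ?nnegrE ?ltW //; lra.
have gen : forall (Q : R) (k : nat), v ^+ 2 * `|Q| <= 2 * (a + v) ^+ k ->
    `|- (a * b ^+ i) * (v * Q / (a + v) ^+ k)| <= 2 * a * b ^+ i / v.
  move=> Q k hQ; rewrite normrM normrN normrM (gtr0_norm a0) normrX (ger0_norm b0).
  rewrite -!mulrA [2 * _]mulrC -!mulrA; apply: ler_wpM2l; first exact: ltW.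
  apply: ler_wpM2l; first by apply: exprn_ge0.
  rewrite mulrA mulrC; exact: rat_bound.
move: gen; case: i hi => [|[|[|[|i]]]] // _ gen.
- have -> : psi a b 1 v = - (a * b ^+ 1) * (v * 1 / (a + v) ^+ 2).
    by rewrite /= expr1 !mulrA mulr1.
  apply: gen; rewrite normr1 mulr1; apply: le_trans hvw _; have := sqr_ge0 (a + v); lra.
- have -> : psi a b 2 v = - (a * b ^+ 2) * (v * (a - v) / (a + v) ^+ 3).
    by rewrite /= !mulrA.
  apply: gen.
  have hQ : `|a - v| <= a + v by rewrite ler_norml; apply/andP; split; lra.
  have := ler_pM (sqr_ge0 v) (normr_ge0 _) hvw hQ.
  move=> h; apply: le_trans h _; rewrite -exprSr; have := exprn_ge0 3 (ltW w0); lra.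
- have -> : psi a b 3 v = - (a * b ^+ 3) * (v * (a ^+ 2 - 4 * a * v + v ^+ 2) / (a + v) ^+ 4).
    by rewrite /= !mulrA.
  apply: gen.
  have hQ : `|a ^+ 2 - 4 * a * v + v ^+ 2| <= 2 * (a + v) ^+ 2.
    rewrite ler_norml; apply/andP; split; nra.
  have := ler_pM (sqr_ge0 v) (normr_ge0 _) hvw hQ.
  move=> h; apply: le_trans h _; rewrite mulrCA -exprD; lra.
Qed.

Lemma s_conv (K s eps A B : R) (i : nat) : 1 <= K -> 0 < eps -> 0 <= A -> A <= B ->
  A * (2 * ln K) ^+ i / powR K (2 * s) <= (B * 2 ^+ i) / (eps ^+ i * powR K (2 * s - i%:R * eps)).
Proof.
move=> K1 e0 A0 AB.
have K0 : 0 < K by lra.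
have L0 : 0 <= ln K by apply: ln_ge0.
set L := ln K.
set E := expR (eps * L).
have E0 : 0 < E by apply: expR_gt0.
have hE : eps * L <= E by have := expR_ge1Dx (eps * L); rewrite -/E; lra.
rewrite /powR (gt_eqF K0).
have -> : expR ((2 * s - i%:R * eps) * ln K) = expR (2 * s * ln K) / E ^+ i.
  by rewrite -expRM_natl -expRB -/L; congr expR; ring.
set U := expR (2 * s * ln K).
have U0 : 0 < U by apply: expR_gt0.
have ei : 0 < eps ^+ i by apply: exprn_gt0.
have -> : B * 2 ^+ i / (eps ^+ i * (U / E ^+ i)) = (B * (2 * E) ^+ i / eps ^+ i) / U.
  rewrite exprMn; field; rewrite ?(lt0r_neq0 U0) ?(lt0r_neq0 E0) ?(lt0r_neq0 e0) ?expf_neq0 ?(lt0r_neq0 U0) ?(lt0r_neq0 E0) ?(lt0r_neq0 e0) //.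
apply: ler_wpM2r; first by rewrite invr_ge0 ltW.
rewrite ler_pdivlMr // -mulrA -exprMn.
have h0 : 0 <= 2 * L * eps by apply: mulr_ge0; [apply: mulr_ge0 => //; lra | lra].
apply: ler_pM => //; first exact: exprn_ge0.
apply: lerXn2r; rewrite ?nnegrE //; first lra.
nra.
Qed.
End S.

Theorem lemma3 (R : realType) (alpha1 : R) (halpha1 : 0 < alpha1) :
  exists (M : nat -> R) (M' : R),
    (forall i : nat, (1 <= i <= 3)%N -> 0 < M i) /\ 0 < M' /\
    forall (d : nat) (s0 s1 alpha0 : R) (ghat : 'rV[int]_d -> R[i]),
      (1 <= d)%N -> 0 < s0 -> s0 < s1 -> 0 < alpha0 -> alpha0 < alpha1 ->
      fourier_L2_0 ghat ->
      forall (eps : R) (i : nat) (s a : R),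
        0 < eps -> (1 <= i <= 3)%N ->
        s0 <= s <= s1 -> alpha0 <= a <= alpha1 ->
        [/\ (l2norm (fun k => ((dalpha_Ek i k s a)%:C%C * ghat k)%R)
             <= \esum_(k in @nonzero_pts d)
                  ((i`!%:R / powR (knorm R k) (2 * s * i%:R)) * Normc.normc (ghat k))%:E)%E,
            (l2norm (fun k => ((ds_Ek i k s a)%:C%C * ghat k)%R)
             <= \esum_(k in @nonzero_pts d)
                  (M i / (eps ^+ i * powR (knorm R k) (2 * s - i%:R * eps))
                     * Normc.normc (ghat k))%:E)%E
          & (l2norm (fun k => ((dsalpha_Ek k s a)%:C%C * ghat k)%R)
             <= \esum_(k in @nonzero_pts d)
                  (M' / (eps * powR (knorm R k) (2 * s - eps)) * Normc.normc (ghat k))%:E)%E].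
Proof.
exists (fun i => 2 * alpha1 * 2 ^+ i), 4.
split; first by move=> i _; rewrite !mulr_gt0 ?exprn_gt0.
split; first lra.
move=> d s0 s1 alpha0 ghat d1 s00 s01 a00 a01 _ eps i s a e0 hi /andP[hs0 hs1] /andP[ha0 ha1].
have a0 : 0 < a by lra.
have hi0 : (0 < i)%N by case/andP: hi.
have hi3 : (i <= 3)%N by case/andP: hi.
split.
- apply: l2_le => k Dk.
  have K1 := @knorm_ge1 R d k Dk.
  have K0 : 0 < knorm R k by lra.
  have c0 : 0 < powR (knorm R k) (2 * s) by apply: powR_gt0.
  have -> : dalpha_Ek i k s a = @FA R (powR (knorm R k) (2 * s)) i a by exact: (@FA_val R _ i a c0 a0).
  rewrite normc_real; apply: ler_wpM2r; first exact: normc_ge0.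
  have -> : powR (knorm R k) (2 * s * i%:R) = (powR (knorm R k) (2 * s)) ^+ i.
    by rewrite powRrM powR_mulrn // ltW.
  exact: (@FA_bound R _ i a c0 a0 hi0).
- apply: l2_le => k Dk.
  have K1 := @knorm_ge1 R d k Dk.
  have K0 : 0 < knorm R k by lra.
  have u0 : 0 < powR (knorm R k) (2 * s) by apply: powR_gt0.
  have b0 : 0 <= 2 * ln (knorm R k) by apply: mulr_ge0; [lra | apply: ln_ge0].
  have -> : ds_Ek i k s a = @FS R a (knorm R k) i s by exact: (@FS_val R a _ i s a0 K0 hi3).
  rewrite normc_real; apply: ler_wpM2r; first exact: normc_ge0.
  apply: le_trans (@psi_bound R a (2 * ln (knorm R k)) (powR (knorm R k) (2 * s)) i a0 u0 b0 hi) _.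
  apply: s_conv => //; lra.
- apply: l2_le => k Dk.
  have K1 := @knorm_ge1 R d k Dk.
  have K0 : 0 < knorm R k by lra.
  have u0 : 0 < powR (knorm R k) (2 * s) by apply: powR_gt0.
  have b0 : 0 <= 2 * ln (knorm R k) by apply: mulr_ge0; [lra | apply: ln_ge0].
  have -> : dsalpha_Ek k s a = (a - powR (knorm R k) (2 * s)) / (a + powR (knorm R k) (2 * s)) ^+ 3
      * (2 * ln (knorm R k) * powR (knorm R k) (2 * s)) by exact: (@mixed_val R a _ s a0 K0).
  rewrite normc_real; apply: ler_wpM2r; first exact: normc_ge0.
  have w0 : 0 < a + powR (knorm R k) (2 * s) by rewrite addr_gt0.
  set U := powR (knorm R k) (2 * s) in u0 w0 *.
  set b := 2 * ln (knorm R k) in b0 *.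
  have -> : (a - U) / (a + U) ^+ 3 * (b * U) = b * (U * (a - U) / (a + U) ^+ 3).
    by rewrite mulrC -!mulrA; congr (_ * _); rewrite mulrCA.
  have h1 : `|b * (U * (a - U) / (a + U) ^+ 3)| <= 2 * b ^+ 1 / U.
    have -> : 2 * b ^+ 1 / U = b * (2 / U) by rewrite expr1; ring.
    rewrite normrM (ger0_norm b0); apply: ler_wpM2l => //.
    apply: rat_bound => //.
    have hQ : `|a - U| <= a + U by rewrite ler_norml; apply/andP; split; lra.
    have hvw : U ^+ 2 <= (a + U) ^+ 2 by apply: lerXn2r; rewrite ?nnegrE ?ltW //; lra.
    have := ler_pM (sqr_ge0 U) (normr_ge0 _) hvw hQ.
    move=> h; apply: le_trans h _; rewrite -exprSr; have := exprn_ge0 3 (ltW w0); lra.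
  apply: le_trans h1 _.
  have h20 : (0 : R) <= 2 by lra.
  have := @s_conv R (knorm R k) s eps 2 2 1 K1 e0 h20 (lexx _).
  rewrite -/U -/b !expr1 mul1r.
  by have -> : (2 : R) * 2 = 4 by lra.
Qed.
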